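(* Let $p$ be an odd prime, $n$ a positive integer, $q=p^n$ (so $q^2=p^{2n}$), and let $k$ be an integer with $1\le k\le n$ such that $2n/\gcd(2n,k)$ is odd. Let $f$ be either $f(x)=x^2$ or $f(x)=x^{p^k+1}$ on $\mathbb F_{q^2}$, and let $\theta\in\mathbb F_{q^2}^*$ be such that $\theta^{q+1}$ is a nonsquare in $\mathbb F_q$. Then the unital $\mathcal U_\theta:=\{(x,t\theta):x\in\mathbb F_{q^2},t\in\mathbb F_q\}\cup\{(\infty)\}$ in $\Pi(f)$ contains an O'Nan configuration.
   Context: For a planar function $f$ on $\mathbb F_{q^2}$ (i.e.\ $x\mapsto f(x+a)-f(x)$ is bijective for each $a\neq0$; both functions above are planar), $\Pi(f)$ is the projective plane with points $(x,y)\in\mathbb F_{q^2}^2$ and $(a)$ for $a\in\mathbb F_{q^2}\cup\{\infty\}$, lines $L_{a,b}=\{(x,f(x+a)-b):x\in\mathbb F_{q^2}\}\cup\{(a)\}$, $N_a=\{(a,y):y\in\mathbb F_{q^2}\}\cup\{(\infty)\}$ ($a,b\in\mathbb F_{q^2}$), $L_\infty=\{(a):a\in\mathbb F_{q^2}\cup\{\infty\}\}$. A unital is a set of $q^3+1$ points meeting every line in $1$ or $q+1$ points, regarded as a design whose blocks are its intersections with lines meeting it in $q+1$ points. An O'Nan configuration consists of four blocks, any two of which meet, such that the six pairwise intersection points are distinct. *)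

(* Defs.v *)
From mathcomp Require Import all_boot all_order all_algebra.
Set Implicit Arguments. Unset Strict Implicit. Unset Printing Implicit Defensive.
Import GRing.Theory.
Local Open Scope ring_scope.

(* Points of Pi(f):  inl (x,y) = affine point (x,y);
   inr (Some a) = point (a);  inr None = point (infinity). *)
Definition pt (F : finFieldType) : finType := ((F * F) + option F)%type.
(* Lines of Pi(f):  inl (a,b) = L_{a,b};  inr (Some a) = N_a;  inr None = L_infinity. *)
Definition ln (F : finFieldType) : finType := ((F * F) + option F)%type.

Definition incident (F : finFieldType) (f : F -> F) (P : pt F) (l : ln F) : bool :=
  match l, P with
  | inl (a, b), inl (x, y) => y == f (x + a) - b
  | inl (a, _), inr (Some c) => c == a
  | inl _, inr None => false
  | inr (Some a), inl (x, _) => x == a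
  | inr (Some _), inr o => o == None
  | inr None, inl _ => false
  | inr None, inr _ => true
  end.

Definition line_pts (F : finFieldType) (f : F -> F) (l : ln F) : {set pt F} :=
  [set P | incident f P l].

Definition U_theta (F : finFieldType) (q : nat) (theta : F) : {set pt F} :=
  [set P : pt F | match P with
                  | inl (x, y) => [exists t : F, (t ^+ q == t) && (y == t * theta)]
                  | inr o => o == None
                  end].

(* block of the design U on line l (only meaningful when it has q+1 points) *)
Definition block (F : finFieldType) (f : F -> F) (U : {set pt F}) (l : ln F) : {set pt F} :=
  U :&: line_pts f l.

Definition is_block_line (F : finFieldType) (f : F -> F) (q : nat) (U : {set pt F}) (l : ln F) : bool :=
  #|block f U l| == q.+1.

Definition has_ONan (F : finFieldType) (f : F -> F) (q : nat) (U : {set pt F}) : Prop :=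
  exists l : 'I_4 -> ln F,
    (forall i, is_block_line f q U (l i)) /\
    (forall i j, i != j -> block f U (l i) != block f U (l j)) /\
    exists P : 'I_4 -> 'I_4 -> pt F,
      (forall i j, i != j -> block f U (l i) :&: block f U (l j) = [set P i j]) /\
      (forall i j i' j' : 'I_4, (i < j)%N -> (i' < j')%N -> (i != i') || (j != j') ->
          P i j != P i' j').

(* Main.v *)
Require Import Defs.
From mathcomp Require Import all_boot all_order all_algebra all_field.
From mathcomp Require Import zify ring.
Set Implicit Arguments. Unset Strict Implicit. Unset Printing Implicit Defensive.
Import GRing.Theory Num.Theory.
Local Open Scope ring_scope.

Section Gen.
Variables (F : finFieldType) (p n : nat).
Hypotheses (pF : p \in [pchar F]) (podd : odd p) (n_gt0 : (0 < n)%N)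
  (cardF : #|F| = (p ^ n * p ^ n)%N).
Let q := (p ^ n)%N.

Lemma pprime : prime p. Proof. exact: pcharf_prime pF. Qed.

Lemma pnatpj j : [pchar F].-nat (p ^ j)%N.
Proof.
rewrite (eq_pnat _ (pcharf_eq pF)) pnatX pnat_id ?orbT //; exact: pprime.
Qed.

Lemma frobD j (x y : F) : (x + y) ^+ (p ^ j) = x ^+ (p ^ j) + y ^+ (p ^ j).
Proof. exact: exprDn_pchar (pnatpj j). Qed.

Lemma frobN j (x : F) : (- x) ^+ (p ^ j) = - (x ^+ (p ^ j)).
Proof. exact: exprNn_pchar (pnatpj j). Qed.

Lemma frobqq (x : F) : (x ^+ q) ^+ q = x.
Proof. by rewrite -exprM -cardF expf_card. Qed.

Lemma two_neq0 : (2%:R : F) != 0.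
Proof.
rewrite -(dvdn_pcharf pF); apply/negP => /(dvdn_leq (isT : (0 < 2)%N)) H.
have := prime_gt1 pprime; move: podd H; case: p => [|[|[|m]]] //.
Qed.

Lemma q_gt2 : (2 < q)%N.
Proof.
have p2 : (2 < p)%N.
  have := prime_gt1 pprime; move: podd; case: p => [|[|[|m]]] //.
rewrite /q; apply: (leq_trans p2); rewrite -{1}(expn1 p) leq_exp2l //.
exact: ltnW.
Qed.

Lemma q_odd : odd q.
Proof. by rewrite /q oddX podd orbT. Qed.

Definition Kset (c : F) := [set x : F | x ^+ q == c * x].

Lemma cardK_le c : (#|Kset c| <= q)%N.
Proof.
pose P : {poly F} := 'X^q - c *: 'X.
have szP : size P = q.+1.
  rewrite /P size_polyDl size_polyXn // size_polyN.
  apply: (leq_ltn_trans (size_scale_leq _ _)); rewrite size_polyX.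
  by have := q_gt2; lia.
have P0 : P != 0 by rewrite -size_poly_eq0 szP.
have := max_poly_roots P0 (rs := enum (Kset c)).
rewrite szP ltnS -cardE; apply.
  apply/allP => x; rewrite mem_enum inE => /eqP Hx.
  by rewrite /root /P !hornerE Hx subrr.
exact: enum_uniq.
Qed.

Lemma two_pow : (2%:R : F) ^+ q = 2%:R.
Proof. by rewrite /q -addn1 natrD frobD expr1n. Qed.

Lemma cardK : #|Kset 1| = q.
Proof.
apply/eqP; rewrite eqn_leq cardK_le /=.
pose h := (2%:R : F)^-1.
have hq : h ^+ q = h by rewrite /h exprVn two_pow.
pose g (x : F) := (h * (x + x ^+ q), h * (x - x ^+ q)).
have ginj : injective g.
  move=> x y [] e1 e2.
  have : h * (x + x ^+ q) + h * (x - x ^+ q) = h * (y + y ^+ q) + h * (y - y ^+ q).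
    by rewrite e1 e2.
  have h2 : h * 2%:R = 1 by rewrite mulVf ?two_neq0.
  have ex : forall z : F, h * (z + z ^+ q) + h * (z - z ^+ q) = z.
    move=> z; rewrite -mulrDr addrACA subrr addr0 -mulr2n -mulr_natl mulrA.
    rewrite /h mulVf ?mul1r //; exact: two_neq0.
  by rewrite !ex.
have sub : g @: [set: F] \subset setX (Kset 1) (Kset (-1)).
  apply/subsetP => _ /imsetP[x _ ->]; rewrite !inE /=.
  rewrite !exprMn hq /q !frobD !frobN frobqq.
  by apply/andP; split; apply/eqP; ring.
have := subset_leq_card sub; rewrite card_imset // cardsX cardsT cardF.
move=> H; have := leq_trans H (leq_mul (leqnn _) (cardK_le (-1))).
rewrite leq_pmul2r // expn_gt0; case: (p) podd => //.
Qed.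
End Gen.

Section Config.
Variables (F : finFieldType) (f : F -> F) (q : nat) (U : {set pt F}).
Variables (L0 L1 L2 L3 : ln F) (E A B C D G : pt F).
Hypotheses (b0 : is_block_line f q U L0) (b1 : is_block_line f q U L1)
  (b2 : is_block_line f q U L2) (b3 : is_block_line f q U L3)
  (i01 : block f U L0 :&: block f U L1 = [set E])
  (i02 : block f U L0 :&: block f U L2 = [set A])
  (i03 : block f U L0 :&: block f U L3 = [set B])
  (i12 : block f U L1 :&: block f U L2 = [set C])
  (i13 : block f U L1 :&: block f U L3 = [set D])
  (i23 : block f U L2 :&: block f U L3 = [set G])
  (q0 : (0 < q)%N)
  (Hu : uniq [:: E; A; B; C; D; G]).

Definition lf (i : 'I_4) : ln F :=
  match val i with 0 => L0 | 1 => L1 | 2 => L2 | _ => L3 end.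
Definition Pf (i j : 'I_4) : pt F :=
  match val i, val j with
  | 0, 1 | 1, 0 => E
  | 0, 2 | 2, 0 => A
  | 0, 3 | 3, 0 => B
  | 1, 2 | 2, 1 => C
  | 1, 3 | 3, 1 => D
  | _, _ => G end.

Lemma inter_ok i j : i != j -> block f U (lf i) :&: block f U (lf j) = [set Pf i j].
Proof.
case: i j => [[|[|[|[|i]]]] Hi] [[|[|[|[|j]]]] Hj] //= _; rewrite /lf /Pf /=;
  by rewrite ?(setIC (block f U L1)) ?(setIC (block f U L2)) ?(setIC (block f U L3)).
Qed.

Lemma config : has_ONan f q U.
Proof.
exists lf; split.
  by case=> [[|[|[|[|i]]]] Hi].
split.
  move=> i j /inter_ok H; apply/eqP => e; move: H; rewrite e setIid => H.
  have : is_block_line f q U (lf j) by case: j {e H} => [[|[|[|[|j]]]] Hj].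
  by rewrite /is_block_line H cards1 eqSS eq_sym; case: (q) q0.
exists Pf; split; first exact: inter_ok.
case=> [[|[|[|[|i]]]] Hi] [[|[|[|[|j]]]] Hj] [[|[|[|[|i']]]] Hi'] [[|[|[|[|j']]]] Hj'] //= _ _ _;
  rewrite /Pf /=; apply/eqP => e; move: Hu; rewrite e /= !inE ?eqxx ?orbT ?andbF //.
Qed.
End Config.

Lemma card_indic (T : finType) (P : pred T) : #|[set x | P x]| = (\sum_x (P x : nat))%N.
Proof. by rewrite -sum1_card big_mkcond /=; apply: eq_bigr => x _; rewrite inE; case: (P x). Qed.

Lemma dcount (T U : finType) (R : T -> U -> bool) :
  (\sum_u #|[set t | R t u]| = \sum_t #|[set u | R t u]|)%N.
Proof.
under eq_bigr do rewrite card_indic. under [RHS]eq_bigr do rewrite card_indic.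
exact: exchange_big.
Qed.

Lemma pcount (T U : finType) (R : T -> U -> bool) :
  #|[set w : T * U | R w.1 w.2]| = (\sum_t #|[set u | R t u]|)%N.
Proof.
rewrite card_indic; under [RHS]eq_bigr do rewrite card_indic.
by rewrite pair_big.
Qed.

Section Gen2.
Variables (F : finFieldType) (p n : nat).
Hypotheses (pF : p \in [pchar F]) (podd : odd p) (n_gt0 : (0 < n)%N)
  (cardF : #|F| = (p ^ n * p ^ n)%N).
Let q := (p ^ n)%N.
Variables (f : F -> F) (theta : F).
Hypotheses (Hpl : forall a, a != 0 -> injective (fun y => f (y + a) - f y))
  (Hsq : forall y, exists g, f y = g ^+ 2)
  (Hf0 : forall y, (f y == 0) = (y == 0))
  (Hth : theta != 0)
  (Hns : ~ exists t : F, t ^+ q = t /\ t ^+ 2 = theta ^+ (q + 1)).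

Definition Hs := locked [set y : F | [exists t : F, (t ^+ q == t) && (y == t * theta)]].

Lemma HsP y : reflect (exists t, t ^+ q = t /\ y = t * theta) (y \in Hs).
Proof.
rewrite /Hs -lock inE; apply: (iffP existsP) => [[t /andP[/eqP ? /eqP ?]]|[t [? ?]]].
  by exists t.
by exists t; apply/andP; split; apply/eqP.
Qed.

Lemma Hs_card : #|Hs| = q.
Proof.
have -> : Hs = (fun t => t * theta) @: Kset p n 1.
  apply/setP => y; apply/HsP/imsetP => [[t [t1 ->]]|[t]].
    by exists t => //; rewrite inE mul1r t1.
  by rewrite inE mul1r => /eqP ? ->; exists t.
rewrite card_imset; first exact: (cardK pF podd n_gt0 cardF).
exact: mulIf.
Qed.

Lemma Hs0 : 0 \in Hs.
Proof.
apply/HsP; exists 0; split; last by rewrite mul0r.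
have := q_gt2 pF podd n_gt0; rewrite /q; case: (p ^ n)%N => // m _.
by rewrite exprS mul0r.
Qed.

Lemma HsB x y : x \in Hs -> y \in Hs -> x - y \in Hs.
Proof.
move=> /HsP[s [s1 ->]] /HsP[t [t1 ->]]; apply/HsP; exists (s - t); split.
  by rewrite /q frobD // frobN // -/q s1 t1.
by rewrite mulrBl.
Qed.

Lemma HsN y : y \in Hs -> - y \in Hs.
Proof. by move=> H; rewrite -sub0r HsB // Hs0. Qed.

Lemma HsD x y : x \in Hs -> y \in Hs -> x + y \in Hs.
Proof. by move=> Hx Hy; rewrite -(opprK y) HsB // HsN. Qed.

Lemma Hs_theta : theta \in Hs.
Proof. by apply/HsP; exists 1; rewrite expr1n mul1r. Qed.

Lemma Hs_ntheta : - theta \in Hs.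
Proof. exact/HsN/Hs_theta. Qed.

Lemma nosq w : w ^+ 2 \in Hs -> w = 0.
Proof.
move=> /HsP[t [t1 Ew]]; apply/eqP; apply/negPn/negP => w0.
have t0 : t != 0.
  by apply/negP => /eqP t0; move: Ew; rewrite t0 mul0r => /eqP; rewrite expf_eq0 (negPf w0) andbF.
apply: Hns; exists (w ^+ q.+1 / t); split.
  rewrite expr_div_n t1 -exprM mulnC exprM.
  by rewrite [X in X / _]exprS (frobqq cardF) (mulrC (w ^+ q)) -exprS.
rewrite expr_div_n -exprM mulnC exprM Ew exprMn [t ^+ _]exprS t1 -expr2 mulrAC divff ?mul1r ?addn1 //.
by rewrite expf_neq0.
Qed.

Lemma fHs y : f y \in Hs -> y = 0.
Proof.
have [g Eg] := Hsq y; rewrite Eg => /nosq g0; apply/eqP; rewrite -Hf0 Eg g0.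
by rewrite expr0n.
Qed.

Definition M z := #|[set y | f y - z \in Hs]|.

Lemma M_Hs z : z \in Hs -> M z = 1%N.
Proof.
move=> Hz; rewrite /M -(cards1 (0 : F)); apply: eq_card => y; rewrite in_set in_set1.
apply/idP/eqP => [H|->]; first by have := HsD H Hz; rewrite subrK; exact: fHs.
have := Hf0 0; rewrite eqxx => /eqP ->; rewrite sub0r; exact: HsN.
Qed.

Lemma card_pre (c : F) : #|[set z | c - z \in Hs]| = q.
Proof.
rewrite -Hs_card -[RHS](card_preimset _ (f := fun z => c - z)); last first.
  by move=> x y /= /addrI /oppr_inj.
by apply: eq_card => z; rewrite !inE.
Qed.

Lemma sumM : (\sum_z M z = q * q * q)%N.
Proof.
rewrite /M (dcount (fun y z => f y - z \in Hs)).
under eq_bigr do rewrite card_pre.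
by rewrite sum_nat_const cardT -cardT cardF mulnC.
Qed.

Lemma countC : #|[set w : F * F | f w.1 - f w.2 \in Hs]| = (q * q + (q * q).-1 * q)%N.
Proof.
pose g (w : F * F) := (w.1 + w.2, w.2).
have ginj : injective g by move=> [a b] [c d] [] /= /[swap] -> /addIr ->.
rewrite -(card_preimset _ ginj).
have -> : #|g @^-1: [set w : F * F | f w.1 - f w.2 \in Hs]|
        = #|[set w : F * F | f (w.1 + w.2) - f w.2 \in Hs]|.
  by apply: eq_card => w; rewrite !inE.
rewrite (pcount (fun a y => f (a + y) - f y \in Hs)) (bigD1 0) //=.
have -> : #|[set y | f (0 + y) - f y \in Hs]| = (q * q)%N.
  rewrite -cardF -cardsT; apply: eq_card => y; rewrite !inE add0r subrr.
  exact: Hs0.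
congr (_ + _)%N.
rewrite (eq_bigr (fun _ => q)).
  by rewrite sum_nat_const cardC1 cardF.
move=> a a0; rewrite -Hs_card -[RHS](card_preimset _ (Hpl a0)).
by apply: eq_card => y; rewrite !inE (addrC a).
Qed.

Lemma sumM2 : (\sum_z M z * M z = q * (q * q + (q * q).-1 * q))%N.
Proof.
have E z : muln (M z) (M z) = #|[set w : F * F | (f w.1 - z \in Hs) && (f w.2 - z \in Hs)]|.
  by rewrite /M -cardsX; apply: eq_card => w; rewrite !inE.
under eq_bigr do rewrite E.
rewrite (dcount (fun (w : F * F) z => (f w.1 - z \in Hs) && (f w.2 - z \in Hs))).
have E2 (w : F * F) : #|[set z | (f w.1 - z \in Hs) && (f w.2 - z \in Hs)]|
     = muln (f w.1 - f w.2 \in Hs) q.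
  case: (boolP (f w.1 - f w.2 \in Hs)) => H.
    rewrite mul1n -(card_pre (f w.2)); apply: eq_card => z; rewrite !in_set.
    apply/andP/idP => [[//]|h2]; split => //.
    by have := HsD H h2; rewrite addrA subrK.
  rewrite mul0n; apply/eqP; rewrite cards_eq0; apply/eqP/setP => z.
  rewrite in_set in_set0; apply/negP => /andP[h1 h2]; apply/negP: H; rewrite negbK.
  by have := HsB h1 h2; rewrite opprB addrA subrK.
under eq_bigr do rewrite E2.
rewrite -big_distrl /= -card_indic countC mulnC //.
Qed.

Lemma M_block b : b \notin Hs -> M b = q.+1.
Proof.
move=> bH.
pose N z : int := (M z)%:R.
pose c : int := (q.+1)%:R.
have S1 : \sum_z N z = (q * q * q)%:R by rewrite -natr_sum sumM.
have S2 : \sum_z N z * N z = (q * (q * q + (q * q).-1 * q))%:R.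
  by rewrite -sumM2 natr_sum; apply: eq_bigr => z _; rewrite natrM.
have q1 : (0 < q * q)%N by rewrite muln_gt0 andbb /q expn_gt0; case: (p) podd.
have Stot : \sum_z (N z - c) ^+ 2 = (q * q * q)%:R.
  rewrite (eq_bigr (fun z => N z * N z - c *+ 2 * N z + c ^+ 2)); last by move=> z _; ring.
  rewrite big_split /= sumrB -mulr_sumr sumr_const S1 S2 cardF.
  rewrite /c -subn1 -mulr_natr -/q !(natrD, natrM, natrB) //; ring.
rewrite (bigID (fun z => z \in Hs)) /= in Stot.
have S3 : \sum_(z | z \in Hs) (N z - c) ^+ 2 = (q * q * q)%:R.
  rewrite (eq_bigr (fun _ => (q * q)%:R)) => [|z Hz]; last first.
    by rewrite /N M_Hs // /c -addn1 natrD !natrM; ring.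
  by rewrite sumr_const Hs_card [RHS]natrM mulr_natr.
move: Stot; rewrite S3 -[X in _ = X]addr0 => /addrI S4.
have := psumr_eq0P (P := fun z => z \notin Hs) (F := fun z => (N z - c) ^+ 2).
move=> /(_ (fun z _ => sqr_ge0 _) S4 b bH) /eqP; rewrite sqrf_eq0 subr_eq0 /N /c eqr_nat.
by move/eqP.
Qed.

Notation U := (U_theta q theta).

Lemma inU x y : (inl (x, y) \in U) = (y \in Hs).
Proof. by rewrite /Hs -lock !inE. Qed.

Lemma inblock a b x y :
  (inl (x, y) \in block f U (inl (a, b))) = (y \in Hs) && (y == f (x + a) - b).
Proof. by rewrite /block in_setI inU /line_pts in_set. Qed.

Lemma blockP a b P : P \in block f U (inl (a, b)) ->
  exists x, P = inl (x, f (x + a) - b) /\ f (x + a) - b \in Hs.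
Proof.
case: P => [[x y]|[c|]].
- by rewrite inblock => /andP[H /eqP E]; exists x; rewrite -E.
- by rewrite /block !inE.
- by rewrite /block !inE.
Qed.

Lemma block_card a b : b \notin Hs -> is_block_line f q U (inl (a, b)).
Proof.
move=> bH; rewrite /is_block_line -(M_block bH).
have -> : block f U (inl (a, b)) =
    (fun z => inl (z - a, f z - b)) @: [set z | f z - b \in Hs] :> {set pt F}.
  apply/setP => P; apply/idP/imsetP => [/blockP [x [-> H]]|[z Hz ->]].
    by exists (x + a); rewrite ?inE // addrK.
  by rewrite inblock subrK eqxx andbT; move: Hz; rewrite inE.
rewrite card_imset //; by move=> z z' [] /addIr.
Qed.

Lemma inter a b a' b' P : a != a' -> P \in block f U (inl (a, b)) ->
  P \in block f U (inl (a', b')) ->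
  block f U (inl (a, b)) :&: block f U (inl (a', b')) = [set P].
Proof.
move=> aa' HP HP'; apply/setP => Q; rewrite in_setI in_set1.
apply/idP/eqP => [/andP[HQ HQ']|->]; last by rewrite HP HP'.
have [x [Ex _]] := blockP HQ; have [x' [Ex' _]] := blockP HQ'.
have [y [Ey _]] := blockP HP; have [y' [Ey' _]] := blockP HP'.
move: Ex'; rewrite Ex => -[<- e1].
move: Ey'; rewrite Ey => -[<- e2].
have da : a - a' != 0 by rewrite subr_eq0.
have E z : z + a' + (a - a') = z + a by rewrite [a - a']addrC addrA addrK.
have h1 : f (x + a) - f (x + a') = b - b'.
  by rewrite -(subrK b (f (x + a))) e1; ring.
have h2 : f (y + a) - f (y + a') = b - b'.
  by rewrite -(subrK b (f (y + a))) e2; ring.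
have Hi := Hpl da; have := @Hi (x + a') (y + a'); rewrite /= !E h1 h2 => /(_ erefl) /addIr ->.
by [].
Qed.


Hypothesis Hev : forall y, f (- y) = f y.

Lemma two_eq (x : F) : x = - x -> x = 0.
Proof.
move=> e; have : 2%:R * x = 0 by rewrite mulr2n mulrDl mul1r {1}e addNr.
by move/eqP; rewrite mulf_eq0 (negPf (two_neq0 pF podd)) /= => /eqP.
Qed.

Lemma nd (x x' w : F) : w != 0 -> x - x' = 2%:R * w -> x != x'.
Proof.
move=> w0 e; apply/eqP => ex; move: e; rewrite ex subrr => /esym/eqP.
by rewrite mulf_eq0 (negPf (two_neq0 pF podd)) (negPf w0).
Qed.

Lemma ne (x x' y y' : F) : (x != x') || (y != y') -> inl (x, y) != inl (x', y') :> pt F.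
Proof. by move=> H; apply/eqP => -[e1 e2]; move: H; rewrite e1 e2 !eqxx. Qed.

Lemma ok x y a b : y \in Hs -> y = f (x + a) - b -> inl (x, y) \in block f U (inl (a, b)).
Proof. by move=> H e; rewrite inblock H e eqxx. Qed.

Lemma onan : has_ONan f q U.
Proof.
have Dinj : injective (fun y => f (y + 1) - f y) := Hpl (oner_neq0 F).
have [g gK Kg] := injF_bij Dinj.
have fuv : f (g theta + 1) - f (g theta) = theta by have := Kg theta.
move: fuv; set v := g theta; set u := v + 1 => fuv.
have ff0 : f 0 = 0 by apply/eqP; rewrite Hf0.
have v0 : v != 0.
  apply/eqP => e; move: fuv; rewrite e ff0 subr0 => e2.
  have := Hs_theta; rewrite -e2 => /fHs u0; move: e2; rewrite u0 ff0 => e3.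
  by move: Hth; rewrite -e3 eqxx.
have u0 : u != 0.
  apply/eqP => e; move: fuv; rewrite e ff0 sub0r => e2.
  have := Hs_ntheta; rewrite -e2 opprK => /fHs v0'.
  by move: v0; rewrite v0' eqxx.
have uv : u - v = 1 by rewrite /u addrAC subrr add0r.
have uv' : u != v by rewrite -subr_eq0 uv oner_neq0.
have upv : u + v != 0.
  apply/eqP => e; have ev : v = - u by rewrite -(addKr u v) e addr0.
  by move: Hth; rewrite -fuv ev Hev subrr eqxx.
have fuH : f u \notin Hs by apply/negP => /fHs e; move: u0; rewrite e eqxx.
have fvH : f v \notin Hs by apply/negP => /fHs e; move: v0; rewrite e eqxx.
have q0 : (0 < q)%N by rewrite /q expn_gt0; case: (p) podd.
have nu : - u != u by apply/eqP => /esym /two_eq; apply/eqP.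
have nv : - v != v by apply/eqP => /esym /two_eq; apply/eqP.
apply: (config (L0 := inl (- u, f v)) (L1 := inl (u, f v)) (L2 := inl (- v, f u))
  (L3 := inl (v, f u)) (E := inl (0, theta)) (A := inl (u + v, 0)) (B := inl (u - v, 0))
  (C := inl (v - u, 0)) (D := inl (- u - v, 0)) (G := inl (0, - theta))).
- exact: block_card.
- exact: block_card.
- exact: block_card.
- exact: block_card.
- apply: inter => //.
  + by apply: ok; [exact: Hs_theta | rewrite add0r Hev fuv].
  + by apply: ok; [exact: Hs_theta | rewrite add0r fuv].
- apply: inter.
  + by rewrite eqr_opp.
  + by apply: ok; [exact: Hs0 | rewrite (_ : u + v + - u = v) ?subrr //; ring].
  + by apply: ok; [exact: Hs0 | rewrite addrK subrr].
- apply: inter.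
  + by apply/eqP => e; move: upv; rewrite -e subrr eqxx.
  + by apply: ok; [exact: Hs0 | rewrite (_ : u - v + - u = - v) ?Hev ?subrr //; ring].
  + by apply: ok; [exact: Hs0 | rewrite subrK subrr].
- apply: inter.
  + by apply/eqP => e; move: upv; rewrite e addNr eqxx.
  + by apply: ok; [exact: Hs0 | rewrite subrK subrr].
  + by apply: ok; [exact: Hs0 | rewrite (_ : v - u + - v = - u) ?Hev ?subrr //; ring].
- apply: inter => //.
  + by apply: ok; [exact: Hs0 | rewrite (_ : - u - v + u = - v) ?Hev ?subrr //; ring].
  + by apply: ok; [exact: Hs0 | rewrite subrK Hev subrr].
- apply: inter; first exact: nv.
  + by apply: ok; [exact: Hs_ntheta | rewrite add0r Hev -fuv opprB].
  + by apply: ok; [exact: Hs_ntheta | rewrite add0r -fuv opprB].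
- exact: q0.
have th0 : theta != 0 := Hth.
rewrite /= !inE !negb_or !andbT.
repeat (apply/andP; split).
all: apply: ne.
- by rewrite eq_sym th0 orbT.
- by rewrite eq_sym th0 orbT.
- by rewrite eq_sym th0 orbT.
- by rewrite eq_sym th0 orbT.
- apply/orP; right; apply: (nd (w := theta)) => //; rewrite opprK; ring.
- apply/orP; left; apply: (nd (w := v)) => //; ring.
- apply/orP; left; apply: (nd (w := u)) => //; ring.
- apply/orP; left; apply: (nd (w := u + v)) => //; ring.
- by apply/orP; right; rewrite eq_sym oppr_eq0.
- apply/orP; left; apply: (nd (w := 1)); rewrite ?oner_neq0 // /u; ring.
- apply/orP; left; apply: (nd (w := u)) => //; ring.
- by apply/orP; right; rewrite eq_sym oppr_eq0.
- apply/orP; left; apply: (nd (w := v)) => //; ring.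
- by apply/orP; right; rewrite eq_sym oppr_eq0.
- by apply/orP; right; rewrite eq_sym oppr_eq0.
Qed.

End Gen2.
Section Pl.
Variables (F : finFieldType) (p n k : nat).
Hypotheses (pF : p \in [pchar F]) (podd : odd p) (n_gt0 : (0 < n)%N)
  (cardF : #|F| = (p ^ n * p ^ n)%N)
  (oddm : odd ((2 * n) %/ gcdn (2 * n) k)).

Lemma powcard (x : F) c : x ^+ ((p ^ n * p ^ n) ^ c) = x.
Proof.
elim: c => [|c IH]; first by rewrite expn0 expr1.
by rewrite expnS mulnC exprM IH -cardF expf_card.
Qed.

Lemma iter_neg (w : F) : w ^+ (p ^ k) = - w ->
  forall j, w ^+ (p ^ (k * j)) = if odd j then - w else w.
Proof.
move=> Hw; elim => [|j IH]; first by rewrite muln0 expn0 expr1.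
rewrite mulnS expnD mulnC exprM IH /=.
by case: (odd j) => /=; rewrite ?(frobN pF) Hw ?opprK.
Qed.

Lemma frob_neg (w : F) : w ^+ (p ^ k) = - w -> w = 0.
Proof.
move=> Hw; have := iter_neg Hw ((2 * n) %/ gcdn (2 * n) k).
rewrite oddm (gcdnC (2 * n)) muln_divCA_gcd expnM.
rewrite (_ : (p ^ (2 * n))%N = (p ^ n * p ^ n)%N); last by rewrite mul2n -addnn expnD.
rewrite powcard => e; apply: (two_eq pF podd); exact: e.
Qed.

Lemma planar_pk a : a != 0 ->
  injective (fun y : F => (y + a) ^+ (p ^ k + 1) - y ^+ (p ^ k + 1)).
Proof.
move=> a0 y1 y2 /= e.
have E (y : F) : (y + a) ^+ (p ^ k + 1) - y ^+ (p ^ k + 1)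
    = a * y ^+ (p ^ k) + a ^+ (p ^ k) * y + a ^+ (p ^ k) * a.
  by rewrite addn1 !exprS (frobD pF); ring.
move: e; rewrite !E => e.
have z0 : a * (y1 - y2) ^+ (p ^ k) + a ^+ (p ^ k) * (y1 - y2) = 0.
  by rewrite (frobD pF) (frobN pF); move: e => /(congr1 (fun t => t - (a * y2 ^+ (p ^ k) + a ^+ (p ^ k) * y2 + a ^+ (p ^ k) * a))); rewrite subrr => <-; ring.
apply/eqP; rewrite -subr_eq0; apply/eqP.
have ak : a ^+ (p ^ k) != 0 by rewrite expf_neq0.
have : (y1 - y2) / a = 0.
  apply: frob_neg; rewrite expr_div_n.
  have -> : (y1 - y2) ^+ (p ^ k) = - (a ^+ (p ^ k) * (y1 - y2)) / a.
    have hX : a * (y1 - y2) ^+ (p ^ k) = - (a ^+ (p ^ k) * (y1 - y2)).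
      by apply/eqP; rewrite -addr_eq0 z0.
    by rewrite -hX; field; rewrite a0.
  by field; rewrite a0 ak.
by move/eqP; rewrite mulf_eq0 invr_eq0 (negPf a0) orbF => /eqP.
Qed.
End Pl.

Theorem theorem3p14 (p n k : nat) (F : finFieldType) (f : F -> F) (theta : F) :
  prime p -> odd p -> (0 < n)%N ->
  #|F| = (p ^ (2 * n))%N ->
  (1 <= k <= n)%N ->
  odd ((2 * n) %/ gcdn (2 * n) k) ->
  (f = (fun x => x ^+ 2) \/ f = (fun x => x ^+ (p ^ k + 1))) ->
  theta != 0 ->
  ~ (exists t : F, t ^+ (p ^ n) = t /\ t ^+ 2 = theta ^+ (p ^ n + 1)) ->
  has_ONan f (p ^ n) (U_theta (p ^ n) theta).
Proof.
move=> pp podd n0 cF _ oddm Hf th0 Hns.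
have pF : p \in [pchar F] := card_finPcharP cF pp.
have cardF : #|F| = (p ^ n * p ^ n)%N by rewrite cF mul2n -addnn expnD.
have t2 : (2%:R : F) != 0 := two_neq0 pF podd.
case: Hf => ->.
- apply: (onan pF podd n0 cardF) => //.
  + move=> a a0 y1 y2 /= e.
    have : 2%:R * a * (y1 - y2) = 0.
      have h : 2%:R * a * (y1 - y2) = ((y1 + a) ^+ 2 - y1 ^+ 2) - ((y2 + a) ^+ 2 - y2 ^+ 2) by ring.
      by rewrite h e subrr.
    by move/eqP; rewrite !mulf_eq0 (negPf t2) (negPf a0) subr_eq0 => /eqP.
  + by move=> y; exists y.
  + by move=> y; rewrite expf_eq0.
  + by move=> y; rewrite sqrrN.
- have ev : ~~ odd (p ^ k + 1) by rewrite addn1 /= oddX podd orbT.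
  apply: (onan pF podd n0 cardF) => //.
  + by move=> a a0; apply: (planar_pk pF podd cardF oddm).
  + move=> y; exists (y ^+ (p ^ k + 1)./2).
    by rewrite -exprM muln2 -{1}(odd_double_half (p ^ k + 1)) (negPf ev) add0n.
  + by move=> y; rewrite expf_eq0 addn1.
  + by move=> y; rewrite exprNn -signr_odd (negPf ev) expr0 mul1r.
Qed.
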